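(* Let $r\ge1$ and $\mu\in\mathcal P_r$. Then $\limsup_{n\to\infty} n\, d_r(\delta^{\mathbf u_n}_\bullet,\mu)>0$, unless $\mu=\delta_a$ for some $a\in\mathbb R$.
   Context: $\mathcal P$ denotes the set of Borel probability measures on $\mathbb R$; $\mathcal P_r=\{\mu\in\mathcal P:\int|x|^r{\rm d}\mu(x)<\infty\}$. For $\mu\in\mathcal P$, $F_\mu(x)=\mu(]-\infty,x])$ and $F_\mu^{-1}(t)=\sup\{x: F_\mu(x)\le t\}$, $t\in]0,1[$. $d_r(\mu,\nu)=\big(\int_0^1|F_\mu^{-1}(t)-F_\nu^{-1}(t)|^r{\rm d}t\big)^{1/r}$ on $\mathcal P_r$. With $\Xi_n=\{\mathbf x\in\mathbb R^n:x_1\le\dots\le x_n\}$ and $\delta^{\mathbf u_n}_{\mathbf x}=\frac1n\sum_{i=1}^n\delta_{x_i}$, set $d_r(\delta^{\mathbf u_n}_\bullet,\mu)=\min_{\mathbf x\in\Xi_n}d_r(\delta^{\mathbf u_n}_{\mathbf x},\mu)$ (the minimum is attained). *)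

(* Defs.v *)
From Stdlib Require Import Reals Lra Classical ClassicalEpsilon.
Open Scope R_scope.

(* A Borel probability measure on R is represented by its distribution
   function F_mu(x) = mu(]-oo,x]) (bijective correspondence). *)
Definition is_cdf (F : R -> R) : Prop :=
  (forall x y, x <= y -> F x <= F y) /\
  (forall x eps, 0 < eps -> exists delta, 0 < delta /\
      forall y, x <= y < x + delta -> Rabs (F y - F x) < eps) /\
  (forall eps, 0 < eps -> exists M, forall x, x <= M -> Rabs (F x) < eps) /\
  (forall eps, 0 < eps -> exists M, forall x, M <= x -> Rabs (F x - 1) < eps).

(* F^{-1}(t) = sup { x : F x <= t } (0 if the sup does not exist). *)
Definition quantile (F : R -> R) (t : R) : R :=
  match excluded_middle_informative
          (exists q, is_lub (fun x => F x <= t) q) with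
  | left H => proj1_sig (constructive_indefinite_description _ H)
  | right _ => 0
  end.

Definition rpow (x r : R) : R := if Rle_dec x 0 then 0 else Rpower x r.

(* Integral over ]0,1[ of a nonnegative function that is Riemann integrable
   on compact subintervals: sup of Riemann integrals over [a,b] in ]0,1[
   (the improper Riemann integral, equal to the Lebesgue integral). *)
Definition int01_is (f : R -> R) (I : R) : Prop :=
  is_lub (fun v => exists a b (pr : Riemann_integrable f a b),
            0 < a /\ a <= b /\ b < 1 /\ v = RiemannInt pr) I.

Definition int01 (f : R -> R) : R :=
  match excluded_middle_informative (exists I, int01_is f I) with
  | left H => proj1_sig (constructive_indefinite_description _ H)
  | right _ => 0
  end.

(* mu in P_r : int |x|^r dmu < oo, i.e. int_0^1 |F^{-1}(t)|^r dt < oo *)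
Definition in_Pr (r : R) (F : R -> R) : Prop :=
  exists I, int01_is (fun t => rpow (Rabs (quantile F t)) r) I.

(* Wasserstein distance d_r via quantile functions *)
Definition d_r (r : R) (F G : R -> R) : R :=
  rpow (int01 (fun t => rpow (Rabs (quantile F t - quantile G t)) r)) (1 / r).

Fixpoint count_le (n : nat) (x : nat -> R) (y : R) : nat :=
  match n with
  | O => O
  | S m => (count_le m x y + (if Rle_dec (x m) y then 1 else 0))%nat
  end.

(* distribution function of delta^{u_n}_x = (1/n) sum_{i<n} delta_{x_i} *)
Definition emp_cdf (n : nat) (x : nat -> R) (y : R) : R :=
  INR (count_le n x y) / INR n.

Definition in_Xi (n : nat) (x : nat -> R) : Prop :=
  forall i j, (i <= j < n)%nat -> x i <= x j.

Definition is_dirac (F : R -> R) (a : R) : Prop :=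
  forall y, F y = if Rle_dec a y then 1 else 0.

(* Main.v *)
Require Import Defs.
From Stdlib Require Import Reals.
Open Scope R_scope.
From Stdlib Require Import Lra Lia Psatz RList RiemannInt_SF ClassicalEpsilon Classical.

Definition approx (f : R -> R) (a b e : R) : Type :=
  { phi:StepFun a b &
      { psi:StepFun a b |
        (forall t:R,
          Rmin a b <= t <= Rmax a b -> Rabs (f t - phi t) <= psi t) /\
        Rabs (RiemannInt_SF psi) < e } }.

Lemma approx_glue (f:R -> R) (a b c e1 e2:R) :
    a <= b -> b <= c -> approx f a b e1 -> approx f b c e2 -> approx f a c (e1 + e2).
Proof.
  intros Hyp1 Hyp2 X X0.
  assert (H : True) by trivial.
  destruct X as [phi1 [psi1 H1]]; destruct X0 as [phi2 [psi2 H2]].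
  set
    (phi3 :=
       fun x:R =>
         match Rle_dec a x with
         | left _ =>
             match Rle_dec x b with
             | left _ => phi1 x
             | right _ => phi2 x
             end
         | right _ => 0
         end).
  set
    (psi3 :=
       fun x:R =>
         match Rle_dec a x with
         | left _ =>
             match Rle_dec x b with
             | left _ => psi1 x
             | right _ => psi2 x
             end
         | right _ => 0
         end).
  cut (IsStepFun phi3 a c).
  1:intro; cut (IsStepFun psi3 a b).
  1:intro; cut (IsStepFun psi3 b c).
  1:intro; assert (IsStepFun psi3 a c) by (apply StepFun_P46 with b; assumption).
  - split with (mkStepFun X); split with (mkStepFun X2); simpl;
      split.
    + intros; unfold phi3, psi3; case (Rle_dec t b) as [|Hnle]; case (Rle_dec a t) as [|Hnle'].
      * elim H1; intros; apply H3.
        replace (Rmin a b) with a.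
        { replace (Rmax a b) with b.
          { split; assumption. }
          unfold Rmax; decide (Rle_dec a b) with Hyp1; reflexivity. }
        unfold Rmin; decide (Rle_dec a b) with Hyp1; reflexivity.
      * elim Hnle'; replace a with (Rmin a c).
        { elim H0; intros; assumption. }
        unfold Rmin; case (Rle_dec a c) as [|[]];
          [ reflexivity | apply Rle_trans with b; assumption ].
      * elim H2; intros; apply H3.
        replace (Rmax b c) with (Rmax a c).
        { elim H0; intros; split; try assumption.
          replace (Rmin b c) with b.
          { auto with real. }
          unfold Rmin; decide (Rle_dec b c) with Hyp2; reflexivity. }
        unfold Rmax; decide (Rle_dec b c) with Hyp2; case (Rle_dec a c) as [|[]];
          [ reflexivity | apply Rle_trans with b; assumption ].
      * elim Hnle'; replace a with (Rmin a c).
        { elim H0; intros; assumption. }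
        unfold Rmin; case (Rle_dec a c) as [|[]];
          [ reflexivity | apply Rle_trans with b; assumption ].
    + rewrite <- (StepFun_P43 X0 X1 X2).
      apply Rle_lt_trans with
        (Rabs (RiemannInt_SF (mkStepFun X0)) + Rabs (RiemannInt_SF (mkStepFun X1))).
      { apply Rabs_triang. }
      
        replace (RiemannInt_SF (mkStepFun X0)) with (RiemannInt_SF psi1).
      { replace (RiemannInt_SF (mkStepFun X1)) with (RiemannInt_SF psi2).
        { apply Rplus_lt_compat.
          { elim H1; intros; assumption. }
          elim H2; intros; assumption. }
        apply Rle_antisym.
        { apply StepFun_P37; try assumption.
          simpl; intros; unfold psi3; elim H0; clear H0; intros;
            destruct (Rle_dec a x) as [Hle|Hnle]; destruct (Rle_dec x b) as [Hle'|Hnle'];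
            [ elim (Rlt_irrefl _ (Rle_lt_trans _ _ _ Hle' H0))
            | right; reflexivity
            | elim Hnle; apply Rle_trans with b; [ assumption | left; assumption ]
            | elim Hnle; apply Rle_trans with b; [ assumption | left; assumption ] ]. }
        apply StepFun_P37; try assumption.
        simpl; intros; unfold psi3; elim H0; clear H0; intros;
          destruct (Rle_dec a x) as [Hle|Hnle]; destruct (Rle_dec x b) as [Hle'|Hnle'];
          [ elim (Rlt_irrefl _ (Rle_lt_trans _ _ _ Hle' H0))
          | right; reflexivity
          | elim Hnle; apply Rle_trans with b; [ assumption | left; assumption ]
          | elim Hnle; apply Rle_trans with b; [ assumption | left; assumption ] ]. }
      apply Rle_antisym.
      { apply StepFun_P37; try assumption.
        simpl; intros; unfold psi3; elim H0; clear H0; intros;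
          destruct (Rle_dec a x) as [Hle|Hnle]; destruct (Rle_dec x b) as [Hle'|Hnle'];
          [ right; reflexivity
          | elim Hnle'; left; assumption
          | elim Hnle; left; assumption
          | elim Hnle; left; assumption ]. }
      apply StepFun_P37; try assumption.
      simpl; intros; unfold psi3; elim H0; clear H0; intros;
        destruct (Rle_dec a x) as [Hle|Hnle]; destruct (Rle_dec x b) as [Hle'|Hnle'];
        [ right; reflexivity
        | elim Hnle'; left; assumption
        | elim Hnle; left; assumption
        | elim Hnle; left; assumption ].
  - assert (H3 := pre psi2); unfold IsStepFun in H3; unfold is_subdivision in H3;
      elim H3; clear H3; intros l1 [lf1 H3]; split with l1;
      split with lf1; unfold adapted_couple in H3; decompose [and] H3;
      clear H3; unfold adapted_couple; repeat split;
      try assumption.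
    intros; assert (H9 := H8 i H3); unfold constant_D_eq, open_interval;
      unfold constant_D_eq, open_interval in H9; intros;
      rewrite <- (H9 x H7); unfold psi3; assert (H10 : b < x).
    { apply Rle_lt_trans with (pos_Rl l1 i).
      { replace b with (Rmin b c).
        { rewrite <- H5; elim (RList_P6 l1); intros; apply H10; try assumption.
          { apply Nat.le_0_l. }
          apply Nat.lt_trans with (pred (length l1)); try assumption; apply Nat.lt_pred_l;
            red; intro; rewrite H12 in H6; discriminate. }
        unfold Rmin; decide (Rle_dec b c) with Hyp2;
          reflexivity. }
      elim H7; intros; assumption. }
    destruct (Rle_dec a x) as [Hle|Hnle]; destruct (Rle_dec x b) as [Hle'|Hnle'];
      [ elim (Rlt_irrefl _ (Rle_lt_trans _ _ _ Hle' H10))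
      | reflexivity
      | elim Hnle; apply Rle_trans with b; [ assumption | left; assumption ]
      | elim Hnle; apply Rle_trans with b; [ assumption | left; assumption ] ].
  - assert (H3 := pre psi1); unfold IsStepFun in H3; unfold is_subdivision in H3;
      elim H3; clear H3; intros l1 [lf1 H3]; split with l1;
      split with lf1; unfold adapted_couple in H3; decompose [and] H3;
      clear H3; unfold adapted_couple; repeat split;
      try assumption.
    intros; assert (H9 := H8 i H3); unfold constant_D_eq, open_interval;
      unfold constant_D_eq, open_interval in H9; intros;
      rewrite <- (H9 x H7); unfold psi3; assert (H10 : x <= b).
    { apply Rle_trans with (pos_Rl l1 (S i)).
      { elim H7; intros; left; assumption. }
      replace b with (Rmax a b).
      { rewrite <- H4; elim (RList_P6 l1); intros; apply H10; try assumption.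
        apply Nat.lt_pred_l; red; intro; rewrite H12 in H6; discriminate. }
      unfold Rmax; decide (Rle_dec a b) with Hyp1; reflexivity. }
    assert (H11 : a <= x).
    { apply Rle_trans with (pos_Rl l1 i).
      { replace a with (Rmin a b).
        { rewrite <- H5; elim (RList_P6 l1); intros; apply H11; try assumption.
          { apply Nat.le_0_l. }
          apply Nat.lt_trans with (pred (length l1)); try assumption; apply Nat.lt_pred_l;
            red; intro; rewrite H13 in H6; discriminate. }
        unfold Rmin; decide (Rle_dec a b) with Hyp1; reflexivity. }
      left; elim H7; intros; assumption. }
    decide (Rle_dec a x) with H11; decide (Rle_dec x b) with H10; reflexivity.
  - apply StepFun_P46 with b.
    { assert (H3 := pre phi1); unfold IsStepFun in H3; unfold is_subdivision in H3;
        elim H3; clear H3; intros l1 [lf1 H3]; split with l1;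
        split with lf1; unfold adapted_couple in H3; decompose [and] H3;
        clear H3; unfold adapted_couple; repeat split;
        try assumption.
      intros; assert (H9 := H8 i H3); unfold constant_D_eq, open_interval;
        unfold constant_D_eq, open_interval in H9; intros;
        rewrite <- (H9 x H7); unfold psi3; assert (H10 : x <= b).
      { apply Rle_trans with (pos_Rl l1 (S i)).
        { elim H7; intros; left; assumption. }
        replace b with (Rmax a b).
        { rewrite <- H4; elim (RList_P6 l1); intros; apply H10; try assumption.
          apply Nat.lt_pred_l; red; intro; rewrite H12 in H6; discriminate. }
        unfold Rmax; decide (Rle_dec a b) with Hyp1; reflexivity. }
      assert (H11 : a <= x).
      { apply Rle_trans with (pos_Rl l1 i).
        { replace a with (Rmin a b).
          { rewrite <- H5; elim (RList_P6 l1); intros; apply H11; try assumption.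
            { apply Nat.le_0_l. }
            apply Nat.lt_trans with (pred (length l1)); try assumption; apply Nat.lt_pred_l;
              red; intro; rewrite H13 in H6; discriminate. }
          unfold Rmin; decide (Rle_dec a b) with Hyp1; reflexivity. }
        left; elim H7; intros; assumption. }
      unfold phi3; decide (Rle_dec a x) with H11; decide (Rle_dec x b) with H10;
        reflexivity || elim n; assumption. }
    assert (H3 := pre phi2); unfold IsStepFun in H3; unfold is_subdivision in H3;
      elim H3; clear H3; intros l1 [lf1 H3]; split with l1;
      split with lf1; unfold adapted_couple in H3; decompose [and] H3;
      clear H3; unfold adapted_couple; repeat split;
      try assumption.
    intros; assert (H9 := H8 i H3); unfold constant_D_eq, open_interval;
      unfold constant_D_eq, open_interval in H9; intros;
      rewrite <- (H9 x H7); unfold psi3; assert (H10 : b < x).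
    { apply Rle_lt_trans with (pos_Rl l1 i).
      { replace b with (Rmin b c).
        { rewrite <- H5; elim (RList_P6 l1); intros; apply H10; try assumption.
          { apply Nat.le_0_l. }
          apply Nat.lt_trans with (pred (length l1)); try assumption; apply Nat.lt_pred_l;
            red; intro; rewrite H12 in H6; discriminate. }
        unfold Rmin; decide (Rle_dec b c) with Hyp2; reflexivity. }
      elim H7; intros; assumption. }
    unfold phi3; destruct (Rle_dec a x) as [Hle|Hnle]; destruct (Rle_dec x b) as [Hle'|Hnle']; intros;
      [ elim (Rlt_irrefl _ (Rle_lt_trans _ _ _ Hle' H10))
      | reflexivity
      | elim Hnle; apply Rle_trans with b; [ assumption | left; assumption ]
      | elim Hnle; apply Rle_trans with b; [ assumption | left; assumption ] ].
Qed.


Lemma approx_weaken f a b e e' : e <= e' -> approx f a b e -> approx f a b e'.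
Proof.
  intros He [phi [psi [H1 H2]]]. exists phi, psi. split; [exact H1| lra].
Qed.

Lemma approx_piece f c d eta : c <= d -> 0 < eta ->
  (forall t, c <= t <= d -> f c <= f t <= f d) ->
  approx f c d ((d - c) * (f d - f c) + eta).
Proof.
  intros Hcd Heta Hm.
  exists (mkStepFun (StepFun_P4 c d (f c))).
  exists (mkStepFun (StepFun_P4 c d (f d - f c))).
  split.
  - intros t Ht. simpl. unfold fct_cte.
    rewrite Rmin_left in Ht by lra. rewrite Rmax_right in Ht by lra.
    destruct (Hm t Ht). rewrite Rabs_right by lra. lra.
  - rewrite StepFun_P18. destruct (Hm c) as [Hc1 Hc2]; [lra|].
    rewrite Rabs_right. lra. apply Rle_ge, Rmult_le_pos; lra.
Qed.

Lemma mono_integrable f a b : a <= b ->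
  (forall s t, a <= s -> s <= t -> t <= b -> f s <= f t) ->
  Riemann_integrable f a b.
Proof.
  intros Hab Hm eps.
  set (D := f b - f a).
  assert (HD : 0 <= D) by (unfold D; assert (f a <= f b) by (apply Hm; lra); lra).
  destruct (constructive_indefinite_description _
              (INR_unbounded (2 * (b - a) * D / eps))) as [N HN].
  assert (HN0 : (0 < N)%nat).
  { destruct N. simpl in HN. exfalso.
    assert (0 <= 2 * (b - a) * D / eps).
    { apply Rmult_le_pos. apply Rmult_le_pos; lra. left; apply Rinv_0_lt_compat, cond_pos. }
    lra. lia. }
  assert (HNr : 0 < INR N) by (apply lt_0_INR; lia).
  set (h := (b - a) / INR N).
  assert (Hh : 0 <= h) by (unfold h; apply Rmult_le_pos; [lra| left; apply Rinv_0_lt_compat; lra]).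
  set (eta := eps / (2 * (INR N + 1))).
  assert (Heta : 0 < eta).
  { unfold eta. apply Rmult_lt_0_compat. apply cond_pos. apply Rinv_0_lt_compat. lra. }
  assert (Hk : forall k, (k <= N)%nat ->
    approx f a (a + INR k * h) (h * (f (a + INR k * h) - f a) + (INR k + 1) * eta)).
  { induction k as [|k IH]; intros Hk.
    - simpl. replace (a + 0 * h) with a by ring.
      apply approx_weaken with ((a - a) * (f a - f a) + eta). lra.
      apply approx_piece; [lra|lra| intros t Ht; replace t with a by lra; lra].
    - assert (Hkb : INR (S k) * h <= b - a).
      { unfold h. apply le_INR in Hk. rewrite <- (Rmult_1_r (b - a)) at 2.
        replace (INR (S k) * ((b - a) / INR N)) with ((b - a) * (INR (S k) / INR N)) by (field; lra).
        apply Rmult_le_compat_l. lra. unfold Rdiv; apply (Rmult_le_reg_r (INR N)); [lra|]; rewrite Rmult_assoc, Rinv_l by lra; lra. }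
      rewrite S_INR in Hkb |- *.
      assert (Hk0 : 0 <= INR k) by apply pos_INR.
      apply approx_weaken with
        ((h * (f (a + INR k * h) - f a) + (INR k + 1) * eta) +
         (((a + (INR k + 1) * h) - (a + INR k * h)) * (f (a + (INR k + 1) * h) - f (a + INR k * h)) + eta)).
      { right. ring. }
      apply (approx_glue f a (a + INR k * h)).
      + nra.
      + nra.
      + apply IH. lia.
      + apply approx_piece. nra. lra.
        intros t Ht. split; apply Hm; nra. }
  specialize (Hk N (le_n N)).
  replace (a + INR N * h) with b in Hk by (unfold h; field; lra).
  eapply approx_weaken; [| exact Hk].
  fold D. unfold eta.
  assert (h * D < eps / 2).
  { unfold h. assert (0 < eps) by apply cond_pos. apply Rmult_lt_reg_l with (2 * INR N / eps). apply Rmult_lt_0_compat; [lra| apply Rinv_0_lt_compat; lra].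
    replace (2 * INR N / eps * ((b - a) / INR N * D)) with (2 * (b - a) * D / eps)
      by (field; split; lra).
    replace (2 * INR N / eps * (eps / 2)) with (INR N) by (field; lra).
    lra. }
  replace ((INR N + 1) * (eps / (2 * (INR N + 1)))) with (eps / 2) by (field; lra).
  lra.
Qed.

Lemma rpow_nonneg x r : 0 <= rpow x r.
Proof. unfold rpow. destruct (Rle_dec x 0). lra. unfold Rpower. left; apply exp_pos. Qed.

Lemma rpow_pos x r : 0 < x -> rpow x r = Rpower x r.
Proof. intros. unfold rpow. destruct (Rle_dec x 0). lra. reflexivity. Qed.

Lemma rpow_le x y r : 0 <= r -> x <= y -> rpow x r <= rpow y r.
Proof.
  intros Hr Hxy. unfold rpow. destruct (Rle_dec x 0).
  - destruct (Rle_dec y 0). lra. unfold Rpower; left; apply exp_pos.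
  - destruct (Rle_dec y 0). lra. apply Rle_Rpower_l; lra.
Qed.

Lemma rpow_abs u r : rpow (Rabs u) r = rpow u r + rpow (- u) r.
Proof.
  unfold rpow. destruct (Rle_dec u 0); destruct (Rle_dec (-u) 0); destruct (Rle_dec (Rabs u) 0).
  - lra.
  - replace u with 0 in * by lra. rewrite Rabs_R0 in n. lra.
  - exfalso; pose proof (Rabs_pos u); assert (Rabs u = - u) by (apply Rabs_left1; lra); lra.
  - rewrite Rabs_left1 by lra. lra.
  - exfalso; rewrite Rabs_right in r1 by lra. lra.
  - rewrite Rabs_right by lra. lra.
  - lra.
  - lra.
Qed.

Lemma rpow_mul x y r : 0 <= x -> 0 <= y -> rpow (x * y) r = rpow x r * rpow y r.
Proof.
  intros Hx Hy. destruct (Req_dec x 0) as [->|Hx0].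
  - rewrite Rmult_0_l. unfold rpow. destruct (Rle_dec 0 0); [|lra]. ring.
  - destruct (Req_dec y 0) as [->|Hy0].
    + rewrite Rmult_0_r. unfold rpow at 1 3. destruct (Rle_dec 0 0); [|lra]. ring.
    + rewrite !rpow_pos by (try apply Rmult_lt_0_compat; lra).
      rewrite Rpower_mult_distr; lra.
Qed.

Lemma rpow_lin s sg r : 1 <= r -> 0 < sg -> 0 <= s ->
  (s - sg) * rpow sg (r - 1) <= rpow s r.
Proof.
  intros Hr Hsg Hs. destruct (Rle_dec s sg).
  - pose proof (rpow_nonneg sg (r-1)). pose proof (rpow_nonneg s r). nra.
  - rewrite !rpow_pos by lra.
    replace r with (1 + (r - 1)) at 2 by ring. rewrite Rpower_plus, Rpower_1 by lra.
    assert (Rpower sg (r-1) <= Rpower s (r-1)) by (apply Rle_Rpower_l; lra).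
    assert (0 < Rpower sg (r-1)) by (unfold Rpower; apply exp_pos).
    nra.
Qed.

Lemma rpow_half u q w r : 0 <= r ->
  rpow (Rabs (u - w) / 2) r <= rpow (Rabs (u - q)) r + rpow (Rabs (q - w)) r.
Proof.
  intros Hr. pose proof (rpow_nonneg (Rabs (u - q)) r). pose proof (rpow_nonneg (Rabs (q - w)) r).
  assert (Rabs (u - w) <= Rabs (u - q) + Rabs (q - w)).
  { replace (u - w) with ((u - q) + (q - w)) by ring. apply Rabs_triang. }
  destruct (Rle_dec (Rabs (u - q)) (Rabs (q - w))).
  - assert (rpow (Rabs (u - w) / 2) r <= rpow (Rabs (q - w)) r) by (apply rpow_le; lra). lra.
  - assert (rpow (Rabs (u - w) / 2) r <= rpow (Rabs (u - q)) r) by (apply rpow_le; lra). lra.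
Qed.

Lemma rpow_inv E r : 0 < r -> 0 < E -> rpow (rpow E r) (1 / r) = E.
Proof.
  intros Hr HE. rewrite (rpow_pos E) by lra. rewrite rpow_pos by (unfold Rpower; apply exp_pos).
  rewrite Rpower_mult. replace (r * (1 / r)) with 1 by (field; lra). apply Rpower_1; lra.
Qed.

Lemma rpow_le1 x r : 0 <= r -> x <= 1 -> rpow x r <= 1.
Proof.
  intros Hr Hx. unfold rpow. destruct (Rle_dec x 0). lra.
  rewrite <- (Rpower_1 1) by lra.
  replace (Rpower 1 1) with 1 by (rewrite Rpower_1; lra).
  assert (Rpower 1 r = 1) by (unfold Rpower; rewrite ln_1, Rmult_0_r, exp_0; reflexivity).
  rewrite <- H. apply Rle_Rpower_l; lra.
Qed.

Lemma quantile_spec G t : (exists q, is_lub (fun x => G x <= t) q) ->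
  is_lub (fun x => G x <= t) (quantile G t).
Proof.
  intros H. unfold quantile. destruct (excluded_middle_informative _) as [H'|H'].
  - exact (proj2_sig (constructive_indefinite_description _ H')).
  - contradiction.
Qed.

Lemma quantile_eq G t q : is_lub (fun x => G x <= t) q -> quantile G t = q.
Proof.
  intros H. apply (is_lub_u (fun x => G x <= t)); [| exact H].
  apply quantile_spec. eauto.
Qed.

Lemma quantile_mono G s t : s <= t ->
  (exists q, is_lub (fun x => G x <= s) q) -> (exists q, is_lub (fun x => G x <= t) q) ->
  quantile G s <= quantile G t.
Proof.
  intros Hst Hs Ht. apply quantile_spec in Hs. apply quantile_spec in Ht.
  apply Hs. intros x Hx. apply Ht. lra.
Qed.

Section CDF.
Variable F : R -> R.
Hypothesis HF : is_cdf F.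

Lemma F_mono x y : x <= y -> F x <= F y.
Proof. destruct HF as [H _]. auto. Qed.

Lemma F_range y : 0 <= F y <= 1.
Proof.
  destruct HF as [Hm [Hr [H0 H1]]]. split.
  - apply Rnot_lt_le; intro Hlt.
    destruct (H0 (- F y)) as [M HM]. lra.
    specialize (HM (Rmin M y) (Rmin_l _ _)).
    assert (F (Rmin M y) <= F y) by (apply Hm, Rmin_r).
    apply Rabs_def2 in HM. lra.
  - apply Rnot_lt_le; intro Hlt.
    destruct (H1 (F y - 1)) as [M HM]. lra.
    specialize (HM (Rmax M y) (Rmax_l _ _)).
    assert (F y <= F (Rmax M y)) by (apply Hm, Rmax_r).
    apply Rabs_def2 in HM. lra.
Qed.

Lemma F_lub t : 0 < t < 1 -> exists q, is_lub (fun x => F x <= t) q.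
Proof.
  intros Ht. destruct HF as [Hm [Hr [H0 H1]]].
  destruct (H0 t) as [M HM]; [lra|].
  destruct (H1 (1 - t)) as [M' HM']; [lra|].
  destruct (completeness (fun x => F x <= t)) as [q Hq].
  - exists M'. intros x Hx. apply Rnot_lt_le; intro Hlt.
    specialize (HM' x (Rlt_le _ _ Hlt)). apply Rabs_def2 in HM'. lra.
  - exists M. specialize (HM M (Rle_refl _)). apply Rabs_def2 in HM. lra.
  - exists q; exact Hq.
Qed.

Lemma Q_mono s t : 0 < s -> s <= t -> t < 1 -> quantile F s <= quantile F t.
Proof. intros. apply quantile_mono; try apply F_lub; lra. Qed.

Lemma nondirac : ~ (exists a, is_dirac F a) ->
  exists a b, 0 < a /\ a < b /\ b < 1 /\ quantile F a < quantile F b.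
Proof.
  intros Hnd. apply NNPP; intro Hc. apply Hnd.
  set (c := quantile F (1/2)).
  assert (Hconst : forall t, 0 < t < 1 -> quantile F t = c).
  { intros t Ht. unfold c. destruct (Rle_dec t (1/2)).
    - destruct (Rle_lt_or_eq_dec _ _ r) as [Hl|He]; [|subst; reflexivity].
      apply Rle_antisym. apply Q_mono; lra.
      apply Rnot_lt_le; intro Hl2. apply Hc. exists t, (1/2). repeat split; lra.
    - apply Rle_antisym. 2: apply Q_mono; lra.
      apply Rnot_lt_le; intro Hl2. apply Hc. exists (1/2), t. repeat split; lra. }
  exists c. intros y. destruct HF as [Hm [Hr [H0 H1]]].
  destruct (Rle_dec c y) as [Hcy|Hcy].
  - destruct (F_range y) as [Fy0 Fy1].
    destruct (Rle_lt_or_eq_dec _ _ Fy1) as [Hlt|]; [|assumption]. exfalso.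
    destruct (Hr y ((1 - F y) / 2)) as [d [Hd Hdy]]; [lra|].
    specialize (Hdy (y + d / 2) ltac:(lra)). apply Rabs_def2 in Hdy.
    pose proof (F_range (y + d/2)).
    set (t := (F (y + d/2) + 1) / 2).
    assert (Ht : 0 < t < 1) by (unfold t; lra).
    pose proof (quantile_spec F t (F_lub t Ht)) as Hq.
    assert (Hqq : y + d / 2 <= quantile F t) by (apply Hq; unfold t; lra).
    rewrite Hconst in Hqq by assumption. lra.
  - destruct (F_range y) as [Fy0 Fy1].
    destruct (Rle_lt_or_eq_dec _ _ Fy0) as [Hlt|]; [|auto]. exfalso.
    set (t := F y / 2).
    assert (Ht : 0 < t < 1) by (unfold t; lra).
    pose proof (quantile_spec F t (F_lub t Ht)) as Hq.
    assert (Hqq : quantile F t <= y).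
    { apply Hq. intros x Hx. apply Rnot_lt_le; intro Hyx.
      assert (F y <= F x) by (apply Hm; lra). unfold t in Hx. lra. }
    rewrite Hconst in Hqq by assumption. lra.
Qed.

End CDF.

Lemma count_bound n x y : (count_le n x y <= n)%nat.
Proof. induction n; simpl; [lia|]. destruct (Rle_dec (x n) y); lia. Qed.

Lemma count_mono m n x y : (m <= n)%nat -> (count_le m x y <= count_le n x y)%nat.
Proof.
  induction 1; [lia|]. simpl. destruct (Rle_dec (x m0) y); lia.
Qed.

Lemma count_all m x y : (forall i, (i < m)%nat -> x i <= y) -> count_le m x y = m.
Proof.
  induction m; intros H; simpl; [reflexivity|].
  rewrite IHm by (intros; apply H; lia).
  destruct (Rle_dec (x m) y) as [|n]; [lia| exfalso; apply n, H; lia].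
Qed.

Lemma count_above n k x y : (k <= n)%nat -> (forall i, (k <= i < n)%nat -> y < x i) ->
  (count_le n x y <= k)%nat.
Proof.
  induction n; intros Hk H; simpl; [lia|].
  destruct (Nat.eq_dec k (S n)) as [->|Hne].
  - pose proof (count_bound n x y). destruct (Rle_dec (x n) y); lia.
  - destruct (Rle_dec (x n) y) as [r|].
    + exfalso. specialize (H n ltac:(lia)). lra.
    + rewrite Nat.add_0_r. apply IHn; [lia|]. intros; apply H; lia.
Qed.

Lemma emp_cell N x k t : (0 < N)%nat -> in_Xi N x -> (k < N)%nat ->
  INR k / INR N <= t < INR (S k) / INR N ->
  is_lub (fun y => emp_cdf N x y <= t) (x k).
Proof.
  intros HN Hx Hk Ht.
  assert (HNr : 0 < INR N) by (apply lt_0_INR; lia).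
  assert (Ht1 : INR k <= t * INR N).
  { destruct Ht as [Ht _]. apply (Rmult_le_compat_r (INR N)) in Ht; [|lra].
    unfold Rdiv in Ht. rewrite Rmult_assoc, Rinv_l in Ht by lra. lra. }
  assert (Ht2 : t * INR N < INR (S k)).
  { destruct Ht as [_ Ht]. apply (Rmult_lt_compat_r (INR N)) in Ht; [|lra].
    unfold Rdiv in Ht. rewrite Rmult_assoc, Rinv_l in Ht by lra. lra. }
  assert (Hemp : forall y, emp_cdf N x y <= t <-> INR (count_le N x y) <= t * INR N).
  { intros y. unfold emp_cdf. split; intros H.
    - apply (Rmult_le_compat_r (INR N)) in H; [|lra].
      unfold Rdiv in H. rewrite Rmult_assoc, Rinv_l in H by lra. lra.
    - apply (Rmult_le_reg_r (INR N)); [lra|].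
      unfold Rdiv. rewrite Rmult_assoc, Rinv_l by lra. lra. }
  split.
  - intros y Hy. apply Hemp in Hy. apply Rnot_lt_le; intro Hlt.
    assert (Hc : (S k <= count_le N x y)%nat).
    { rewrite <- (count_all (S k) x y). apply count_mono. lia.
      intros i Hi. apply Rle_trans with (x k). apply Hx; lia. lra. }
    apply le_INR in Hc. lra.
  - intros M HM. apply Rnot_lt_le; intro Hlt.
    set (y := (M + x k) / 2).
    assert (y <= M).
    { apply HM. apply Hemp.
      assert (Hc : (count_le N x y <= k)%nat).
      { apply count_above. lia. intros i Hi.
        assert (x k <= x i) by (apply Hx; lia). unfold y; lra. }
      apply le_INR in Hc. lra. }
    unfold y in H; lra.
Qed.

Lemma emp_q N x k t : (0 < N)%nat -> in_Xi N x -> (k < N)%nat ->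
  INR k / INR N <= t < INR (S k) / INR N -> quantile (emp_cdf N x) t = x k.
Proof. intros. apply quantile_eq. apply emp_cell; auto. Qed.

Lemma find_cell N t : (0 < N)%nat -> 0 <= t < 1 ->
  exists k, (k < N)%nat /\ INR k / INR N <= t < INR (S k) / INR N.
Proof.
  intros HN Ht.
  assert (HNr : 0 < INR N) by (apply lt_0_INR; lia).
  set (P := fun k => INR k / INR N <= t).
  assert (Hgen : forall m, P 0%nat -> ~ P m -> exists k, (k < m)%nat /\ P k /\ ~ P (S k)).
  { induction m; intros H0 Hm. contradiction.
    destruct (classic (P m)) as [Hp|Hp].
    - exists m. split; [lia|auto].
    - destruct (IHm H0 Hp) as [k [Hk1 Hk2]]. exists k. split; [lia|auto]. }
  destruct (Hgen N) as [k [Hk [Hp Hnp]]].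
  - unfold P. simpl. unfold Rdiv. rewrite Rmult_0_l. lra.
  - unfold P. unfold Rdiv. rewrite Rinv_r by lra. lra.
  - exists k. split; [auto|]. unfold P in *. split; [auto| lra].
Qed.

Lemma emp_lub N x t : (0 < N)%nat -> in_Xi N x -> 0 <= t < 1 ->
  exists q, is_lub (fun y => emp_cdf N x y <= t) q.
Proof.
  intros HN Hx Ht. destruct (find_cell N t HN Ht) as [k [Hk Hkt]].
  exists (x k). apply emp_cell; auto.
Qed.

Lemma emp_mono N x s t : (0 < N)%nat -> in_Xi N x -> 0 <= s -> s <= t -> t < 1 ->
  quantile (emp_cdf N x) s <= quantile (emp_cdf N x) t.
Proof. intros. apply quantile_mono; auto; apply emp_lub; auto; lra. Qed.

Lemma emp_bound N x t : (0 < N)%nat -> in_Xi N x -> 0 <= t < 1 ->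
  Rabs (quantile (emp_cdf N x) t) <= Rabs (x 0%nat) + Rabs (x (N - 1)%nat).
Proof.
  intros HN Hx Ht. destruct (find_cell N t HN Ht) as [k [Hk Hkt]].
  rewrite (emp_q N x k t) by auto.
  assert (x 0%nat <= x k) by (apply Hx; lia).
  assert (x k <= x (N-1)%nat) by (apply Hx; lia).
  unfold Rabs; repeat destruct Rcase_abs; lra.
Qed.
From Coquelicot Require Import Coquelicot.

Lemma anti_integrable f a b : a <= b ->
  (forall s t, a <= s -> s <= t -> t <= b -> f t <= f s) ->
  Riemann_integrable f a b.
Proof.
  intros Hab Hm.
  apply Riemann_integrable_ext with (fun t => - (- f t)).
  { intros; ring. }
  apply Riemann_integrable_Ropp. apply mono_integrable; auto.
  intros s t Hs Hst Ht. specialize (Hm s t Hs Hst Ht). lra.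
Qed.

Lemma rq_integrable (Q : R -> R) v r a b : 0 <= r -> a <= b ->
  (forall s t, a <= s -> s <= t -> t <= b -> Q s <= Q t) ->
  Riemann_integrable (fun t => rpow (Rabs (v - Q t)) r) a b.
Proof.
  intros Hr Hab HQ.
  apply Riemann_integrable_ext with (fun t => rpow (v - Q t) r + 1 * rpow (- (v - Q t)) r).
  { intros. rewrite rpow_abs. ring. }
  apply RiemannInt_P10.
  - apply anti_integrable; auto. intros s t Hs Hst Ht. apply rpow_le; auto.
    specialize (HQ s t Hs Hst Ht). lra.
  - apply mono_integrable; auto. intros s t Hs Hst Ht. apply rpow_le; auto.
    specialize (HQ s t Hs Hst Ht). lra.
Qed.

Definition Bd (f : R -> R) : Prop := exists B, forall a b (pr : Riemann_integrable f a b),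
  0 < a -> a <= b -> b < 1 -> RiemannInt pr <= B.

Lemma int01_lb f : Bd f -> forall u v, 0 < u -> u <= v -> v < 1 -> ex_RInt f u v ->
  RInt f u v <= int01 f.
Proof.
  intros [B HB] u v Hu Huv Hv Hex.
  set (pr := ex_RInt_Reals_0 f u v Hex).
  rewrite (RInt_Reals f u v pr).
  set (S := fun w => exists a b (pr : Riemann_integrable f a b),
            0 < a /\ a <= b /\ b < 1 /\ w = RiemannInt pr).
  assert (HS : S (RiemannInt pr)) by (exists u, v, pr; auto).
  destruct (completeness S) as [I HI].
  - exists B. intros w [a [b [p [H1 [H2 [H3 ->]]]]]]. apply HB; auto.
  - eauto.
  - unfold int01. destruct (excluded_middle_informative _) as [H|H].
    + pose proof (proj2_sig (constructive_indefinite_description _ H)) as Hl.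
      simpl in Hl. apply Hl. exact HS.
    + exfalso. apply H. exists I. exact HI.
Qed.

Lemma int01_nonneg f : Bd f -> 0 <= int01 f.
Proof.
  intros Hb. pose proof (int01_lb f Hb (1/2) (1/2)) as H.
  rewrite RInt_point in H. apply H; try lra. apply ex_RInt_point.
Qed.

Lemma Bd_lemma F r G M : 1 <= r -> is_cdf F -> in_Pr r F ->
  (forall t, 0 < t < 1 -> Rabs (quantile G t) <= M) ->
  Bd (fun t => rpow (Rabs (quantile G t - quantile F t)) r).
Proof.
  intros Hr HF [IQ HIQ] HM.
  assert (M0 : 0 <= M) by (specialize (HM (1/2) ltac:(lra)); pose proof (Rabs_pos (quantile G (1/2))); lra).
  set (c := rpow (2 * M) r).
  assert (Hc : 0 <= c) by apply rpow_nonneg.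
  set (p2 := Rpower 2 r).
  assert (Hp2 : 0 < p2) by (unfold p2, Rpower; apply exp_pos).
  exists (c + p2 * IQ). intros a b pr Ha Hab Hb.
  assert (Hq : Riemann_integrable (fun t => rpow (Rabs (quantile F t)) r) a b).
  { apply Riemann_integrable_ext with (fun t => rpow (Rabs (0 - quantile F t)) r).
    { intros. f_equal. rewrite Rminus_0_l, Rabs_Ropp. reflexivity. }
    apply rq_integrable; [lra|auto|]. intros. apply Q_mono; auto; lra. }
  pose proof (RiemannInt_P10 p2 (RiemannInt_P14 a b c) Hq) as Hg.
  apply Rle_trans with (RiemannInt Hg).
  - apply RiemannInt_P19; auto. intros t Ht. unfold fct_cte.
    set (u := quantile G t). set (q := quantile F t).
    assert (Hu : Rabs u <= M) by (apply HM; lra).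
    assert (Htr : Rabs (u - q) <= Rabs u + Rabs q).
    { unfold Rminus. rewrite <- (Rabs_Ropp q). apply Rabs_triang. }
    pose proof (rpow_nonneg (Rabs q) r).
    destruct (Rle_dec (Rabs q) M).
    + assert (rpow (Rabs (u - q)) r <= c) by (apply rpow_le; lra). nra.
    + assert (rpow (Rabs (u - q)) r <= rpow (2 * Rabs q) r) by (apply rpow_le; lra).
      rewrite rpow_mul in H0 by (pose proof (Rabs_pos q); lra).
      rewrite (rpow_pos 2) in H0 by lra. fold p2 in H0. lra.
  - rewrite (RiemannInt_P12 (RiemannInt_P14 a b c) Hq Hg Hab).
    rewrite RiemannInt_P15.
    assert (RiemannInt Hq <= IQ) by (apply HIQ; exists a, b, Hq; auto).
    nra.
Qed.

Definition fN (r : R) (F : R -> R) (N : nat) (x : nat -> R) :=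
  fun t => rpow (Rabs (quantile (emp_cdf N x) t - quantile F t)) r.

Lemma INR_div_pos k N : (0 < k)%nat -> (0 < N)%nat -> 0 < INR k / INR N.
Proof. intros. apply Rdiv_lt_0_compat; apply lt_0_INR; lia. Qed.

Lemma INR_div_lt1 k N : (k < N)%nat -> INR k / INR N < 1.
Proof.
  intros. assert (0 < INR N) by (apply lt_0_INR; lia).
  apply lt_INR in H. apply (Rmult_lt_reg_r (INR N)); auto.
  unfold Rdiv. rewrite Rmult_assoc, Rinv_l by lra. lra.
Qed.

Lemma INR_div_le k m N : (k <= m)%nat -> (0 < N)%nat -> INR k / INR N <= INR m / INR N.
Proof.
  intros. assert (0 < INR N) by (apply lt_0_INR; lia). apply le_INR in H.
  unfold Rdiv. apply Rmult_le_compat_r; auto. left; apply Rinv_0_lt_compat; auto.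
Qed.

Lemma fN_cell r F N x k : is_cdf F -> 0 <= r -> in_Xi N x -> (1 <= k)%nat -> (k + 2 <= N)%nat ->
  ex_RInt (fN r F N x) (INR k / INR N) (INR (S k) / INR N).
Proof.
  intros HF Hr Hx Hk HkN.
  assert (HNr : 0 < INR N) by (apply lt_0_INR; lia).
  assert (H0 : 0 < INR k / INR N) by (apply INR_div_pos; lia).
  assert (H1 : INR (S k) / INR N < 1) by (apply INR_div_lt1; lia).
  assert (H01 : INR k / INR N <= INR (S k) / INR N) by (apply INR_div_le; lia).
  apply ex_RInt_ext with (fun t => rpow (Rabs (x k - quantile F t)) r).
  - intros t Ht. rewrite Rmin_left in Ht by auto. rewrite Rmax_right in Ht by auto.
    unfold fN. rewrite (emp_q N x k t); auto; try lia. lra.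
  - apply ex_RInt_Reals_1. apply rq_integrable; auto.
    intros. apply Q_mono; auto; lra.
Qed.

Lemma fN_chain r F N x : is_cdf F -> 0 <= r -> in_Xi N x ->
  forall d, (d + 2 <= N)%nat -> ex_RInt (fN r F N x) (INR 1 / INR N) (INR (1 + d) / INR N).
Proof.
  intros HF Hr Hx. induction d; intros Hd.
  - apply ex_RInt_point.
  - apply ex_RInt_Chasles with (INR (1 + d) / INR N).
    + apply IHd; lia.
    + replace (1 + S d)%nat with (S (1 + d)) by lia. apply fN_cell; auto; lia.
Qed.

Lemma fN_int r F N x lo hi : is_cdf F -> 0 <= r -> in_Xi N x -> (2 <= N)%nat ->
  1 / INR N <= lo -> lo <= hi -> hi <= 1 - 1 / INR N -> ex_RInt (fN r F N x) lo hi.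
Proof.
  intros HF Hr Hx HN HL HLR HR.
  assert (HNr : 0 < INR N) by (apply lt_0_INR; lia).
  pose proof (fN_chain r F N x HF Hr Hx (N - 2) ltac:(lia)) as Hc.
  replace (1 + (N - 2))%nat with (N - 1)%nat in Hc by lia.
  rewrite minus_INR in Hc by lia. simpl INR in Hc.
  replace ((INR N - 1) / INR N) with (1 - 1 / INR N) in Hc by (field; lra).
  apply (ex_RInt_Chasles_2 (V := R_CompleteNormedModule)) with (1 / INR N). lra.
  apply (ex_RInt_Chasles_1 (V := R_CompleteNormedModule)) with (1 - 1 / INR N). lra. exact Hc.
Qed.

Lemma fN_Bd r F N x : 1 <= r -> is_cdf F -> in_Pr r F -> (0 < N)%nat -> in_Xi N x ->
  Bd (fN r F N x).
Proof.
  intros. apply Bd_lemma with (Rabs (x 0%nat) + Rabs (x (N - 1)%nat)); auto.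
  intros t Ht. apply emp_bound; auto; lra.
Qed.
Set Bullet Behavior "Strict Subproofs".

Lemma HL1 p l nn : 0 < nn -> 0 <= l -> l <= p -> p * nn / (nn + 1) <= p - l / (2 * (nn + 1)).
Proof.
  intros Hn Hl Hp.
  assert (E : p - l / (2 * (nn + 1)) - p * nn / (nn + 1) = (2 * p - l) / (2 * (nn + 1))) by (field; repeat split; intro; lra).
  assert (0 <= (2 * p - l) / (2 * (nn + 1))) by (apply Rdiv_le_0_compat; lra). lra.
Qed.

Lemma HL2 p l nn : 0 < nn -> 0 < l -> p <= 1 - l -> p + l / (2 * (nn + 1)) < (p * nn + 1) / (nn + 1).
Proof.
  intros Hn Hl Hp.
  assert (E : (p * nn + 1) / (nn + 1) - (p + l / (2 * (nn + 1))) = (2 - 2 * p - l) / (2 * (nn + 1))) by (field; repeat split; intro; lra).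
  assert (0 < (2 - 2 * p - l) / (2 * (nn + 1))) by (apply Rdiv_lt_0_compat; lra). lra.
Qed.

Lemma HL3 l nn : 0 < nn -> 0 < l <= 1 -> l / (2 * (nn + 1)) < 1 / nn.
Proof.
  intros Hn Hl.
  assert (E : 1 / nn - l / (2 * (nn + 1)) = (2 * nn + 2 - l * nn) / (2 * nn * (nn + 1))) by (field; repeat split; intro; lra).
  assert (0 < (2 * nn + 2 - l * nn) / (2 * nn * (nn + 1))).
  { apply Rdiv_lt_0_compat; nra. }
  lra.
Qed.

Lemma INR_div_mul k n : (0 < n)%nat -> INR k / INR n * INR n = INR k.
Proof. intros. field. apply not_0_INR. lia. Qed.

Lemma RInt_const_R c u v : RInt (fun _ => c) u v = (v - u) * c.
Proof. rewrite RInt_const. reflexivity. Qed.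

Section Core.
Variables (r : R) (F : R -> R) (a b : R).
Hypotheses (Hr : 1 <= r) (HF : is_cdf F) (HP : in_Pr r F) (Ha : 0 < a) (Hab : a < b) (Hb : b < 1)
  (HQ : quantile F a < quantile F b).

Definition hh := quantile F b - quantile F a.
Definition lam := Rmin a (1 - b) / 2.
Definition K3 := lam * hh * rpow (hh / 16) (r - 1) / 32.
Definition K := Rmin (lam * rpow (hh / 4) r) K3.

Lemma lam_facts : 0 < lam /\ lam <= a / 2 /\ lam <= (1 - b) / 2.
Proof.
  unfold lam. pose proof (Rmin_l a (1 - b)). pose proof (Rmin_r a (1 - b)).
  assert (0 < Rmin a (1 - b)) by (apply Rmin_glb_lt; lra). lra.
Qed.

Lemma hh_pos : 0 < hh.
Proof. unfold hh; lra. Qed.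

Lemma K_pos : 0 < K.
Proof.
  destruct lam_facts as [Hl _]. pose proof hh_pos.
  unfold K, K3. apply Rmin_glb_lt.
  - apply Rmult_lt_0_compat; auto. rewrite rpow_pos by lra. unfold Rpower; apply exp_pos.
  - apply Rdiv_lt_0_compat; [|lra]. apply Rmult_lt_0_compat; [nra|].
    rewrite rpow_pos by lra. unfold Rpower; apply exp_pos.
Qed.


Lemma HL4 l nn : 0 < nn -> 0 < l <= 1 -> 2 * (l / (2 * (nn + 1))) <= 1 / nn.
Proof.
  intros Hn Hl.
  assert (E : 1 / nn - 2 * (l / (2 * (nn + 1))) = (nn + 1 - l * nn) / (nn * (nn + 1))) by (field; repeat split; intro; lra).
  assert (0 <= (nn + 1 - l * nn) / (nn * (nn + 1))).
  { apply Rdiv_le_0_compat; nra. }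
  lra.
Qed.

Section Win.
Variables (n : nat) (x x' : nat -> R).
Hypotheses (Hn2 : (2 <= n)%nat) (Hnl : 1 / INR n <= lam / 2) (Hx : in_Xi n x) (Hx' : in_Xi (S n) x').

Definition nn := INR n.
Definition dl := lam / (2 * (nn + 1)).
Definition f1 := fN r F n x.
Definition f2 := fN r F (S n) x'.
Definition g := fun t => f1 t + f2 t.
Definition Lo := lam / 2.
Definition Hi := 1 - lam / 2.

Lemma nn_pos : 0 < nn.
Proof. unfold nn. apply lt_0_INR. lia. Qed.

Lemma lam_le1 : 0 < lam <= 1 /\ lam <= 1/4.
Proof. destruct lam_facts as [H1 [H2 H3]]. lra. Qed.

Lemma dl_facts : 0 < dl /\ 2 * dl <= 1 / nn /\ dl <= lam / 2.
Proof.
  pose proof nn_pos. destruct lam_le1. unfold dl. split; [|split].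
  - apply Rdiv_lt_0_compat; lra.
  - apply HL4; lra.
  - apply Rmult_le_reg_r with (2 * (nn + 1)). lra.
    field_simplify; [|lra]. nra.
Qed.

Lemma ex1 : ex_RInt f1 Lo Hi.
Proof.
  destruct lam_le1. apply fN_int; auto; unfold Lo, Hi; lra.
Qed.

Lemma inv_Sn : 1 / INR (S n) <= 1 / INR n.
Proof.
  pose proof nn_pos. unfold nn in H. rewrite S_INR.
  apply Rmult_le_compat_l. lra. apply Rinv_le_contravar; lra.
Qed.

Lemma ex2 : ex_RInt f2 Lo Hi.
Proof.
  destruct lam_le1. pose proof inv_Sn. apply fN_int; auto; try lia; unfold Lo, Hi; lra.
Qed.

Lemma exg : ex_RInt g Lo Hi.
Proof. exact (ex_RInt_plus _ _ _ _ ex1 ex2). Qed.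

Lemma RInt_g : RInt g Lo Hi = RInt f1 Lo Hi + RInt f2 Lo Hi.
Proof. exact (RInt_plus _ _ _ _ ex1 ex2). Qed.

Lemma g_sub u v : Lo <= u -> u <= v -> v <= Hi -> ex_RInt g u v.
Proof.
  intros. apply (ex_RInt_Chasles_2 (V := R_CompleteNormedModule)) with Lo. lra.
  apply (ex_RInt_Chasles_1 (V := R_CompleteNormedModule)) with Hi. lra. exact exg.
Qed.

Lemma g_nonneg t : 0 <= g t.
Proof. unfold g, f1, f2, fN. pose proof (rpow_nonneg (Rabs (quantile (emp_cdf n x) t - quantile F t)) r).
  pose proof (rpow_nonneg (Rabs (quantile (emp_cdf (S n) x') t - quantile F t)) r). lra. Qed.

Lemma g_int_nonneg u v : Lo <= u -> u <= v -> v <= Hi -> 0 <= RInt g u v.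
Proof. intros. apply RInt_ge_0; auto. apply g_sub; auto. intros; apply g_nonneg. Qed.

Lemma half_bound u q w c : Rabs (u - w) / 2 >= c ->
  rpow c r <= rpow (Rabs (u - q)) r + rpow (Rabs (w - q)) r.
Proof.
  intros H. rewrite (Rabs_minus_sym w q).
  apply Rle_trans with (rpow (Rabs (u - w) / 2) r). apply rpow_le; lra.
  apply rpow_half. lra.
Qed.

Lemma window k : (1 <= k)%nat -> (k < n)%nat -> lam <= INR k / nn <= 1 - lam ->
  dl * rpow ((x k - x (k - 1)%nat) / 4) r <= RInt g (INR k / nn - dl) (INR k / nn + dl).
Proof.
  intros Hk1 Hkn Hp.
  pose proof nn_pos as Hnn. destruct lam_le1 as [Hl1 Hl2]. destruct dl_facts as [Hd1 [Hd2 Hd3]].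
  set (p := INR k / nn) in *.
  assert (HkE : INR k = p * nn) by (unfold p; field; lra).
  assert (HS : INR (S n) = nn + 1) by (unfold nn; apply S_INR).
  assert (HSk : INR (S k) = p * nn + 1) by (rewrite S_INR; lra).
  assert (Hk1E : INR (k - 1) = p * nn - 1) by (rewrite minus_INR by lia; simpl; lra).
  assert (HL1' := HL1 p lam nn Hnn ltac:(lra) ltac:(lra)). fold dl in HL1'.
  assert (HL2' := HL2 p lam nn Hnn ltac:(lra) ltac:(lra)). fold dl in HL2'.
  assert (Hinv : (p * nn - 1) / nn = p - 1 / nn) by (field; lra).
  assert (Hinv2 : (p * nn + 1) / nn = p + 1 / nn) by (field; lra).
  assert (Qm_w : forall t, p - dl < t < p + dl -> quantile (emp_cdf (S n) x') t = x' k).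
  { intros t Ht. apply emp_q; auto; try lia. rewrite HS, HkE, HSk. lra. }
  assert (Qn_l : forall t, p - dl < t < p -> quantile (emp_cdf n x) t = x (k - 1)%nat).
  { intros t Ht. apply emp_q; auto; try lia. fold nn. rewrite Hk1E.
    replace (S (k - 1)) with k by lia. fold p. rewrite Hinv. lra. }
  assert (Qn_r : forall t, p < t < p + dl -> quantile (emp_cdf n x) t = x k).
  { intros t Ht. apply emp_q; auto; try lia. fold nn p. rewrite HSk, Hinv2. lra. }
  assert (Hin : Lo <= p - dl /\ p + dl <= Hi) by (unfold Lo, Hi; lra).
  set (cL := rpow (Rabs (x (k - 1)%nat - x' k) / 2) r).
  set (cR := rpow (Rabs (x k - x' k) / 2) r).
  assert (HIL : dl * cL <= RInt g (p - dl) p).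
  { replace (dl * cL) with (RInt (fun _ => cL) (p - dl) p). 2:{ rewrite RInt_const_R. match goal with |- ?A = ?B => change (@eq R A B) end; ring. }
    apply RInt_le. lra. apply ex_RInt_const. apply g_sub; lra.
    intros t Ht. unfold g, f1, f2, fN. rewrite Qm_w by lra. rewrite Qn_l by lra.
    apply half_bound. lra. }
  assert (HIR : dl * cR <= RInt g p (p + dl)).
  { replace (dl * cR) with (RInt (fun _ => cR) p (p + dl)) by (rewrite RInt_const_R; match goal with |- ?A = ?B => change (@eq R A B) end; ring).
    apply RInt_le. lra. apply ex_RInt_const. apply g_sub; lra.
    intros t Ht. unfold g, f1, f2, fN. rewrite Qm_w by lra. rewrite Qn_r by lra.
    apply half_bound. lra. }
  assert (HC : RInt g (p - dl) p + RInt g p (p + dl) = RInt g (p - dl) (p + dl)).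
  { exact (RInt_Chasles g (p - dl) p (p + dl) (g_sub (p - dl) p ltac:(lra) ltac:(lra) ltac:(lra))
                                  (g_sub p (p + dl) ltac:(lra) ltac:(lra) ltac:(lra))). }
  assert (Hs : x (k - 1)%nat <= x k) by (apply Hx; lia).
  assert (Hmax : rpow ((x k - x (k - 1)%nat) / 4) r <= cL + cR).
  { pose proof (rpow_nonneg (Rabs (x (k - 1)%nat - x' k) / 2) r).
    pose proof (rpow_nonneg (Rabs (x k - x' k) / 2) r). fold cL cR in H, H0.
    assert (Htri : x k - x (k - 1)%nat <= Rabs (x (k - 1)%nat - x' k) + Rabs (x k - x' k)).
    { unfold Rabs; repeat destruct Rcase_abs; lra. }
    destruct (Rle_dec (x k - x (k - 1)%nat) (2 * Rabs (x (k - 1)%nat - x' k))).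
    - assert (rpow ((x k - x (k - 1)%nat) / 4) r <= cL) by (apply rpow_le; lra). lra.
    - assert (rpow ((x k - x (k - 1)%nat) / 4) r <= cR) by (apply rpow_le; lra). lra. }
  rewrite <- HC. nra.
Qed.


Lemma sum_lb kA kB :
  (kB < n)%nat ->
  (forall k, (kA < k <= kB)%nat -> lam <= INR k / nn <= 1 - lam) ->
  Lo <= INR kA / nn + dl -> INR kB / nn + dl <= Hi ->
  forall d, (kA + d <= kB)%nat ->
  dl * (rpow (hh / (4 * nn) / 4) (r - 1) / 4) * ((x (kA + d)%nat - x kA) - INR d * (hh / (4 * nn)))
    <= RInt g Lo (INR (kA + d) / nn + dl).
Proof.
  intros HkB Hrange Hbase Htop.
  pose proof nn_pos as Hnn. destruct lam_le1 as [Hl1 Hl2]. destruct dl_facts as [Hd1 [Hd2 Hd3]].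
  pose proof hh_pos as Hh.
  set (sg := hh / (4 * nn)).
  assert (Hsg : 0 < sg) by (unfold sg; apply Rdiv_lt_0_compat; lra).
  set (c0 := rpow (sg / 4) (r - 1) / 4).
  assert (Hc0 : 0 <= c0) by (unfold c0; pose proof (rpow_nonneg (sg / 4) (r - 1)); lra).
  assert (Hmono : forall k, (k <= kB)%nat -> INR k / nn <= INR kB / nn).
  { intros. apply INR_div_le; auto. lia. }
  intros d; induction d as [|d IHd]; intros Hd.
  - rewrite Nat.add_0_r. simpl INR. replace ((x kA - x kA) - 0 * sg) with 0 by ring.
    rewrite Rmult_0_r. pose proof (Hmono kA ltac:(lia)). apply g_int_nonneg; lra.
  - set (k := (kA + S d)%nat).
    assert (Hk1 : (1 <= k)%nat) by (unfold k; lia).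
    assert (Hkn : (k < n)%nat) by (unfold k; lia).
    assert (Hr1 := Hrange k ltac:(unfold k; lia)).
    assert (HkE : INR k / nn = INR (kA + d) / nn + 1 / nn).
    { unfold k. replace (kA + S d)%nat with (S (kA + d)) by lia. rewrite S_INR. field. lra. }
    assert (Hkm1 : (k - 1)%nat = (kA + d)%nat) by (unfold k; lia).
    pose proof (window k Hk1 Hkn Hr1) as HW. rewrite Hkm1 in HW.
    set (q := INR (kA + d) / nn) in *.
    assert (Hq : Lo <= q + dl) by (pose proof (INR_div_le kA (kA + d) n ltac:(lia) ltac:(lia)) as Hkd; fold nn in Hkd; fold q in Hkd; lra).
    assert (HkB' : INR k / nn <= INR kB / nn) by (apply Hmono; unfold k; lia).
    specialize (IHd ltac:(lia)). fold q in IHd.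
    rewrite HkE in HW, HkB' |- *.
    assert (C1 : RInt g Lo (q + dl) + RInt g (q + dl) (q + 1 / nn + dl) = RInt g Lo (q + 1 / nn + dl)).
    { exact (RInt_Chasles g Lo (q + dl) (q + 1 / nn + dl) (g_sub Lo (q + dl) ltac:(lra) ltac:(lra) ltac:(lra))
          (g_sub (q + dl) (q + 1 / nn + dl) ltac:(lra) ltac:(lra) ltac:(lra))). }
    assert (C2 : RInt g (q + dl) (q + 1 / nn - dl) + RInt g (q + 1 / nn - dl) (q + 1 / nn + dl)
                 = RInt g (q + dl) (q + 1 / nn + dl)).
    { exact (RInt_Chasles g (q + dl) (q + 1 / nn - dl) (q + 1 / nn + dl)
          (g_sub (q + dl) (q + 1 / nn - dl) ltac:(lra) ltac:(lra) ltac:(lra))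
          (g_sub (q + 1 / nn - dl) (q + 1 / nn + dl) ltac:(lra) ltac:(lra) ltac:(lra))). }
    assert (M0 : 0 <= RInt g (q + dl) (q + 1 / nn - dl)) by (apply g_int_nonneg; lra).
    assert (Hs : x (kA + d)%nat <= x k) by (apply Hx; unfold k; lia).
    assert (Hlin := rpow_lin ((x k - x (kA + d)%nat) / 4) (sg / 4) r Hr ltac:(lra) ltac:(lra)).
    assert (Hlin' : c0 * ((x k - x (kA + d)%nat) - sg) <= rpow ((x k - x (kA + d)%nat) / 4) r).
    { unfold c0. lra. }
    rewrite <- C1, <- C2. rewrite S_INR.
    assert (dl * c0 * ((x k - x (kA + d)%nat) - sg) <= dl * rpow ((x k - x (kA + d)%nat) / 4) r).
    { rewrite Rmult_assoc. apply Rmult_le_compat_l; lra. }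
    nra.
Qed.

Lemma rpow_split y : 0 < y -> y * rpow y (r - 1) = rpow y r.
Proof.
  intros Hy. rewrite !rpow_pos by auto.
  replace r with (1 + (r - 1)) at 2 by ring. rewrite Rpower_plus, Rpower_1 by auto. ring.
Qed.

Lemma core : K * rpow (1 / INR (S n)) r <= int01 f1 + int01 f2.
Proof.
  pose proof nn_pos as Hnn. destruct lam_le1 as [Hl1 Hl2]. destruct dl_facts as [Hd1 [Hd2 Hd3]].
  destruct lam_facts as [_ [Hla Hlb]].
  pose proof hh_pos as Hh. pose proof K_pos as HK.
  assert (HS : INR (S n) = nn + 1) by (unfold nn; apply S_INR).
  assert (Hnl' : 1 / nn <= lam / 2) by exact Hnl.
  assert (B1 : Bd f1) by (apply fN_Bd; auto; lia).
  assert (B2 : Bd f2) by (apply fN_Bd; auto; lia).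
  pose proof (int01_nonneg _ B1) as E1n. pose proof (int01_nonneg _ B2) as E2n.
  assert (Hr1 : rpow (1 / INR (S n)) r <= 1).
  { apply rpow_le1. lra. rewrite HS. apply (Rmult_le_reg_r (nn + 1)); [lra|].
    field_simplify; lra. }
  assert (HKr : K * rpow (1 / INR (S n)) r <= K).
  { pose proof (rpow_nonneg (1 / INR (S n)) r). nra. }
  assert (HK1 : K <= lam * rpow (hh / 4) r) by apply Rmin_l.
  assert (HK2 : K <= K3) by apply Rmin_r.
  set (Qn := quantile (emp_cdf n x)).
  set (A := a - lam). set (B := b + lam).
  assert (HA0 : 0 <= A) by (unfold A; lra). assert (HB1 : B < 1) by (unfold B; lra).
  destruct (Rlt_dec (Qn B) (quantile F b - hh / 4)) as [C1|C1].
  {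
    assert (Hex : ex_RInt f1 b B) by (apply fN_int; auto; try lra; fold nn; unfold B; lra).
    assert (HI : RInt f1 b B <= int01 f1) by (apply int01_lb; auto; unfold B; lra).
    assert (lam * rpow (hh / 4) r <= RInt f1 b B).
    { replace (lam * rpow (hh / 4) r) with (RInt (fun _ => rpow (hh / 4) r) b B)
        by (rewrite RInt_const_R; unfold B; match goal with |- ?A = ?B => change (@eq R A B) end; ring).
      apply RInt_le; auto. unfold B; lra. apply ex_RInt_const.
      intros t Ht. unfold f1, fN. fold Qn. apply rpow_le. lra.
      assert (Qn t <= Qn B) by (unfold Qn; apply emp_mono; auto; try lia; unfold B in *; lra).
      assert (quantile F b <= quantile F t) by (apply Q_mono; auto; unfold B in *; lra).
      rewrite Rabs_left1; lra. }
    lra. }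
  destruct (Rlt_dec (quantile F a + hh / 4) (Qn A)) as [C2|C2].
  {
    assert (Hex : ex_RInt f1 A a) by (apply fN_int; auto; try lra; fold nn; unfold A; lra).
    assert (HI : RInt f1 A a <= int01 f1) by (apply int01_lb; auto; unfold A; lra).
    assert (lam * rpow (hh / 4) r <= RInt f1 A a).
    { replace (lam * rpow (hh / 4) r) with (RInt (fun _ => rpow (hh / 4) r) A a)
        by (rewrite RInt_const_R; unfold A; match goal with |- ?A = ?B => change (@eq R A B) end; ring).
      apply RInt_le; auto. unfold A; lra. apply ex_RInt_const.
      intros t Ht. unfold f1, fN. fold Qn. apply rpow_le. lra.
      assert (Qn A <= Qn t) by (unfold Qn; apply emp_mono; auto; try lia; unfold A in *; lra).
      assert (quantile F t <= quantile F a) by (apply Q_mono; auto; unfold A in *; lra).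
      rewrite Rabs_right; lra. }
    lra. }
  apply Rnot_lt_le in C1. apply Rnot_lt_le in C2.
  destruct (find_cell n A ltac:(lia) ltac:(unfold A; lra)) as [kA [HkAn HkA]].
  destruct (find_cell n B ltac:(lia) ltac:(unfold B; lra)) as [kB [HkBn HkB]].
  assert (QA : Qn A = x kA) by (apply emp_q; auto; lia).
  assert (QB : Qn B = x kB) by (apply emp_q; auto; lia).
  assert (Hdiff : hh / 2 <= x kB - x kA) by (unfold hh in *; lra).
  assert (HkAB : (kA <= kB)%nat).
  { destruct (Nat.le_gt_cases kA kB); auto. assert (x kB <= x kA) by (apply Hx; lia). lra. }
  fold nn in HkA, HkB.
  assert (HSA : INR (S kA) / nn = INR kA / nn + 1 / nn) by (rewrite S_INR; field; lra).
  assert (Hrange : forall k, (kA < k <= kB)%nat -> lam <= INR k / nn <= 1 - lam).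
  { intros k Hk. split.
    - pose proof (INR_div_le (S kA) k n ltac:(lia) ltac:(lia)). fold nn in H. unfold A in HkA. lra.
    - pose proof (INR_div_le k kB n ltac:(lia) ltac:(lia)). fold nn in H. unfold B in HkB. lra. }
  assert (Hbase : Lo <= INR kA / nn + dl) by (unfold Lo, A in *; lra).
  assert (Htop : INR kB / nn + dl <= Hi) by (unfold Hi, B in *; lra).
  pose proof (sum_lb kA kB HkBn Hrange Hbase Htop (kB - kA) ltac:(lia)) as HS3.
  replace (kA + (kB - kA))%nat with kB in HS3 by lia.
  set (sg := hh / (4 * nn)) in *.
  set (c0 := rpow (sg / 4) (r - 1) / 4) in *.
  assert (Hc0 : 0 <= c0) by (unfold c0; pose proof (rpow_nonneg (sg / 4) (r - 1)); lra).
  assert (Hd : INR (kB - kA) <= nn) by (unfold nn; apply le_INR; lia).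
  assert (Hsgn : nn * sg = hh / 4) by (unfold sg; field; lra).
  assert (Hsg : 0 < sg) by (unfold sg; apply Rdiv_lt_0_compat; lra).
  assert (L1 : dl * c0 * (hh / 4) <= RInt g Lo (INR kB / nn + dl)).
  { eapply Rle_trans; [|exact HS3]. apply Rmult_le_compat_l. nra. nra. }
  assert (HkAB' : INR kA / nn <= INR kB / nn) by (apply INR_div_le; lia).
  assert (L2 : RInt g Lo (INR kB / nn + dl) <= RInt g Lo Hi).
  { rewrite <- (RInt_Chasles g Lo (INR kB / nn + dl) Hi).
    pose proof (g_int_nonneg (INR kB / nn + dl) Hi ltac:(lra) ltac:(lra) ltac:(lra)).
    change (RInt g Lo (INR kB / nn + dl) <= RInt g Lo (INR kB / nn + dl) + RInt g (INR kB / nn + dl) Hi). lra.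
    apply g_sub; lra. apply g_sub; lra. }
  assert (L3 : RInt f1 Lo Hi + RInt f2 Lo Hi <= int01 f1 + int01 f2).
  { apply Rplus_le_compat; apply int01_lb; auto; unfold Lo, Hi; try lra. exact ex1. exact ex2. }
  rewrite RInt_g in L2.
  assert (L4 : K3 * rpow (1 / INR (S n)) r <= dl * c0 * (hh / 4)).
  { rewrite HS. unfold c0, dl, K3.
    assert (Hp1 : 0 < 1 / (nn + 1)) by (apply Rdiv_lt_0_compat; lra).
    assert (R1 : rpow (hh / 16 * (1 / (nn + 1))) (r - 1) <= rpow (sg / 4) (r - 1)).
    { apply rpow_le. lra. unfold sg.
      replace (hh / (4 * nn) / 4) with (hh / 16 * (1 / nn)) by (field; lra).
      apply Rmult_le_compat_l. lra. apply Rmult_le_compat_l. lra. apply Rinv_le_contravar; lra. }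
    rewrite rpow_mul in R1 by lra.
    rewrite <- (rpow_split (1 / (nn + 1))) by auto.
    pose proof (rpow_nonneg (hh / 16) (r - 1)). pose proof (rpow_nonneg (1 / (nn + 1)) (r - 1)).
    replace (lam / (2 * (nn + 1))) with (lam / 2 * (1 / (nn + 1))) by (field; lra).
    assert (0 <= lam * hh) by nra.
    assert (lam * hh * rpow (hh / 16) (r - 1) * rpow (1 / (nn + 1)) (r - 1) <=
            lam * hh * rpow (sg / 4) (r - 1)) by (rewrite Rmult_assoc; apply Rmult_le_compat_l; lra).
    assert (0 <= 1 / (nn + 1) * rpow (1 / (nn + 1)) (r - 1)) by nra.
    nra. }
  assert (K * rpow (1 / INR (S n)) r <= K3 * rpow (1 / INR (S n)) r).
  { apply Rmult_le_compat_r. apply rpow_nonneg. auto. }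
  lra.
Qed.

End Win.
End Core.

Theorem theorem5p7 (r : R) (F : R -> R) :
  1 <= r -> is_cdf F -> in_Pr r F ->
  ~ (exists a : R, is_dirac F a) ->
  exists eps : R, 0 < eps /\
    forall N : nat, exists n : nat, (N <= n)%nat /\
      forall x : nat -> R, in_Xi n x ->
        eps <= INR n * d_r r (emp_cdf n x) F.
Proof.
  intros Hr HF HP Hnd.
  destruct (nondirac F HF Hnd) as [a [b [Ha [Hab [Hb HQ]]]]].
  pose proof (K_pos r F a b Ha Hb HQ) as HK.
  set (K0 := K r F a b) in *.
  set (c := rpow (K0 / 2) (1 / r)).
  assert (Hc : 0 < c) by (unfold c; rewrite rpow_pos by lra; unfold Rpower; apply exp_pos).
  exists (c / 2). split; [lra|].
  intros N.
  destruct (lam_facts a b Ha Hb) as [Hl _].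
  destruct (INR_unbounded (2 / lam a b)) as [n0 Hn0].
  set (M := (N + n0 + 2)%nat).
  assert (HM2 : (2 <= M)%nat) by (unfold M; lia).
  assert (HMr : 0 < INR M) by (apply lt_0_INR; lia).
  assert (HMl : 1 / INR M <= lam a b / 2).
  { assert (INR n0 <= INR M) by (apply le_INR; unfold M; lia).
    assert (H2 : 2 / lam a b < INR M) by lra.
    apply (Rmult_le_reg_r (INR M * 2 / lam a b)).
    apply Rdiv_lt_0_compat; lra.
    replace (1 / INR M * (INR M * 2 / lam a b)) with (2 / lam a b) by (field; split; lra).
    replace (lam a b / 2 * (INR M * 2 / lam a b)) with (INR M) by (field; lra).
    lra. }
  destruct (classic (forall x, in_Xi M x -> c / 2 <= INR M * d_r r (emp_cdf M x) F)) as [G1|G1].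
  { exists M. split; [unfold M; lia| exact G1]. }
  destruct (classic (forall x, in_Xi (S M) x -> c / 2 <= INR (S M) * d_r r (emp_cdf (S M) x) F)) as [G2|G2].
  { exists (S M). split; [unfold M; lia| exact G2]. }
  exfalso.
  apply not_all_ex_not in G1. destruct G1 as [x G1].
  apply imply_to_and in G1. destruct G1 as [Hx G1]. apply Rnot_le_lt in G1.
  apply not_all_ex_not in G2. destruct G2 as [x' G2].
  apply imply_to_and in G2. destruct G2 as [Hx' G2]. apply Rnot_le_lt in G2.
  pose proof (core r F a b Hr HF HP Ha Hab Hb HQ M x x' HM2 HMl Hx Hx') as Hcore.
  fold K0 in Hcore.
  unfold d_r in G1, G2. fold (fN r F M x) in G1. fold (fN r F (S M) x') in G2.
  unfold f1, f2 in Hcore.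
  set (E1 := int01 (fN r F M x)) in *.
  set (E2 := int01 (fN r F (S M) x')) in *.
  set (y := 1 / INR (S M)) in *.
  assert (HSM : INR (S M) = INR M + 1) by apply S_INR.
  assert (Hy : 0 < y) by (unfold y; rewrite HSM; apply Rdiv_lt_0_compat; lra).
  assert (Hyr : 0 < rpow y r) by (rewrite rpow_pos by lra; unfold Rpower; apply exp_pos).
  set (T := K0 * rpow y r) in *.
  assert (HT : 0 < T) by (unfold T; nra).
  assert (Hroot : rpow (T / 2) (1 / r) = c * y).
  { unfold T, c. replace (K0 * rpow y r / 2) with (K0 / 2 * rpow y r) by field.
    rewrite rpow_mul by (try apply rpow_nonneg; lra).
    rewrite rpow_inv by lra. reflexivity. }
  assert (H1r : 0 <= 1 / r) by (apply Rdiv_le_0_compat; lra).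
  destruct (Rle_dec (T / 2) E1) as [C1|C1].
  - assert (c * y <= rpow E1 (1 / r)) by (rewrite <- Hroot; apply rpow_le; lra).
    assert (INR M * (c * y) <= INR M * rpow E1 (1 / r)) by (apply Rmult_le_compat_l; lra).
    assert (INR M * y >= 1 / 2).
    { unfold y. rewrite HSM. apply Rle_ge. apply (Rmult_le_reg_r (INR M + 1)); [lra|].
      replace (INR M * (1 / (INR M + 1)) * (INR M + 1)) with (INR M) by (field; lra).
      assert (2 <= INR M) by (replace 2 with (INR 2) by (simpl; lra); apply le_INR; lia). lra. }
    nra.
  - assert (C2 : T / 2 <= E2) by lra.
    assert (c * y <= rpow E2 (1 / r)) by (rewrite <- Hroot; apply rpow_le; lra).
    assert (INR (S M) * (c * y) <= INR (S M) * rpow E2 (1 / r)) by (apply Rmult_le_compat_l; lra).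
    assert (INR (S M) * y = 1) by (unfold y; field; lra).
    nra.
Qed.
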